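(* Let $n \ge 1$, $1 \le i \le n+1$, $0 \le k \le n$, $0 \le \ell \le n-k$ be integers. Let $T(n;i,k,\ell,m)$ denote the number of rooted trees on the vertex set $[n+1]=\{1,\ldots,n+1\}$ in which the root is $i$, the root has exactly $k$ children smaller than $i$ and exactly $\ell$ children larger than $i$, and the subtrees hanging from the children smaller than $i$ contain in total $m$ vertices (so the subtrees hanging from the children larger than $i$ contain in total $n-m$ vertices). Then $$\sum_{m=k}^{n-\ell} T(n;i,k,\ell,m) \;=\; \binom{i-1}{k}\binom{n+1-i}{\ell}\,(k+\ell)\,n^{\,n-k-\ell-1}.$$
   Context: A rooted tree on a vertex set $V$ is a tree with vertex set $V$ together with a distinguished vertex (the root). Removing the root from a rooted tree leaves a forest of rooted trees whose roots are the children of the root; the ''subtrees hanging from'' a set of children are the components of this forest rooted at those children. Vertices are compared by their integer labels. *)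

(* Defs.v *)
From mathcomp Require Import all_boot all_order all_algebra.
Set Implicit Arguments. Unset Strict Implicit. Unset Printing Implicit Defensive.

(* Vertices of [n+1] = {1,...,n+1} are represented by 'I_(n+1); the ordinal
   v stands for the label v+1.  The order on ordinals coincides with the
   order on labels. *)

Section Trees.
Variable V : finType.

Definition adj (E : {set {set V}}) : rel V := fun x y => [set x; y] \in E.

Definition is_tree (E : {set {set V}}) : bool :=
  [forall e in E, #|e| == 2] &&
  [forall x, forall y, connect (adj E) x y] &&
  (#|E| == #|V|.-1).

Definition adj_del (E : {set {set V}}) (r : V) : rel V :=
  fun x y => [&& x != r, y != r & adj E x y].

Definition children (E : {set {set V}}) (r : V) : {set V} :=
  [set c | adj E r c].

Definition subtree (E : {set {set V}}) (r c : V) : {set V} :=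
  [set y | connect (adj_del E r) c y].

End Trees.

Definition Tcount (n i k l m : nat) : nat :=
  let r : 'I_(n.+1) := inord i.-1 in
  #|[set E : {set {set 'I_(n.+1)}} |
      [&& is_tree E,
          #|[set c in children E r | c < r]| == k,
          #|[set c in children E r | r < c]| == l &
          \sum_(c in children E r | c < r) #|subtree E r c| == m]]|.

(* Main.v *)
Require Import Defs.
From mathcomp Require Import all_boot all_order all_algebra.
From mathcomp Require Import ring lra zify.
Set Implicit Arguments. Unset Strict Implicit. Unset Printing Implicit Defensive.


Section FunCount.
Variable T : finType.
Implicit Types (X R J : {set T}) (f g h : {ffun T -> T}).

Definition Fset X R := [set f : {ffun T -> T} | [forall x, if x \in X then
  (f x \in X :|: R) && [exists y in R, fconnect f x y] else f x == x]].

Lemma FsetP X R f : reflect (forall x, if x \in X then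
  (f x \in X :|: R) /\ (exists2 y, y \in R & fconnect f x y) else f x = x)
  (f \in Fset X R).
Proof.
rewrite inE; apply: (iffP forallP) => H x; move: (H x); case: (x \in X) => //=.
- by case/andP=> -> /exists_inP.
- by move/eqP.
- by case=> -> /exists_inP ->.
- by move=> ->.
Qed.

Lemma iter_fix f y k : f y = y -> iter k f y = y.
Proof. by move=> fy; elim: k => //= k ->. Qed.

Lemma fconnect_iterP f x y : fconnect f x y -> exists k, iter k f x = y.
Proof. by move=> H; exists (findex f x y); apply: iter_findex. Qed.

Definition Jf X R f := [set x in X | f x \in R].
Definition Hset J R := [set h : {ffun T -> T} |
  [forall x, if x \in J then h x \in R else h x == x]].
Definition glue J (p : {ffun T -> T} * {ffun T -> T}) : {ffun T -> T} :=
  [ffun x => if x \in J then p.2 x else p.1 x].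

Lemma Hset_card J R : #|Hset J R| = #|R| ^ #|J|.
Proof.
have -> : #|Hset J R| =
   #|family (fun x : T => if x \in J then mem R else mem (pred1 x))|.
  apply: eq_card => h; rewrite inE; apply/forallP/familyP => H x; move: (H x);
  by case: (x \in J) => //= /eqP.
rewrite card_family foldrE big_map big_enum /=.
rewrite (bigID (mem J)) /= [X in _ * X]big1 ?muln1; last first.
  by move=> x /negbTE Hx; rewrite Hx card1.
rewrite (eq_bigr (fun _ => #|R|)); last by move=> x ->.
by rewrite prod_nat_const.
Qed.

Lemma disj_notin X R x : X :&: R = set0 -> x \in X -> x \notin R.
Proof.
move=> H xX; apply/negP => xR.
have: x \in X :&: R by rewrite inE xX xR.
by rewrite H inE.
Qed.

Lemma fiber X R J : X :&: R = set0 -> J \subset X ->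
  [set f in Fset X R | Jf X R f == J] =
  glue J @: setX (Fset (X :\: J) J) (Hset J R).
Proof.
move=> XR JX; apply/setP => f; apply/idP/idP.
- case/setIdP => /FsetP Ff /eqP HJ.
  have inJ x : (x \in J) = (x \in X) && (f x \in R) by rewrite -HJ inE.
  pose g := [ffun x => if x \in J then x else f x].
  pose h := [ffun x => if x \in J then f x else x].
  apply/imsetP; exists (g, h); last first.
    by apply/ffunP => x; rewrite !ffunE /=; case: ifP => // ->.
  rewrite inE /=; apply/andP; split.
  + apply/FsetP => x; rewrite !ffunE.
    case: ifP => [/setDP [xX xJ] | xXJ].
    * rewrite (negbTE xJ); have := Ff x; rewrite xX; case=> fxXR [y yR fy].
      have fxX : f x \in X.
        case/setUP: fxXR => // fxR; move: xJ; by rewrite inJ xX fxR.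
      split.
        rewrite inE; case: (boolP (f x \in J)) => fxJ; first by rewrite orbT.
        by rewrite inE fxJ fxX.
      have claim k : (iter k g x \in J) \/
             (iter k f x = iter k g x /\ iter k g x \in X :\: J).
        elim: k => [|k [IH|[IH1 IH2]]] /=; first by right; rewrite inE xJ xX.
        * by left; rewrite ffunE IH.
        * move: IH2; rewrite inE => /andP [nJ kX]; rewrite ffunE (negbTE nJ) IH1.
          case: (boolP (f (iter k g x) \in J)) => fJ; first by left.
          right; split => //; rewrite inE fJ /=.
          have := Ff (iter k g x); rewrite kX; case=> /setUP [] // fR _.
          by move: nJ; rewrite inJ kX fR.
      have [k fk] := fconnect_iterP fy.
      case: (claim k) => [kJ | [e1 e2]].
        by exists (iter k g x) => //; apply: fconnect_iter.
      move: e2; rewrite inE => /andP [_ kX].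
      by move: (disj_notin XR kX); rewrite -e1 fk yR.
    * case: ifP => // xJ; have := Ff x.
      by case: ifP => // xX; move: xXJ; rewrite inE xJ xX.
  + rewrite inE; apply/forallP => x; rewrite ffunE; case: ifP => xJ; rewrite xJ //.
    by move: xJ; rewrite inJ => /andP [].
- case/imsetP => [[g h]] /setXP [/= /FsetP Gg]; rewrite inE => /forallP Hh ->.
  have gJ x : x \in J -> g x = x.
    by move=> xJ; have := Gg x; rewrite inE xJ.
  have hR x : x \in J -> h x \in R.
    by move=> xJ; have := Hh x; rewrite xJ.
  have JXx x : x \in J -> x \in X by move=> xJ; apply: (subsetP JX).
  have gX x : x \in X -> x \notin J -> g x \in X.
    move=> xX xJ; have := Gg x; rewrite inE xJ xX /=; case=> /setUP [] //.
      by rewrite inE => /andP [].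
    by move=> /JXx.
  have claim x k : iter k (glue J (g, h)) x = iter k g x \/
                   iter k (glue J (g, h)) x \in R.
    elim: k => [|k [IH|IH]] /=; first by left.
    + rewrite ffunE /= IH; case: ifP => kJ; [right; exact: hR | by left].
    + right; rewrite ffunE /=.
      have nJ : iter k (glue J (g, h)) x \notin J.
        apply/negP => kJ; move: (disj_notin XR (JXx _ kJ)); by rewrite IH.
      rewrite (negbTE nJ).
      have := Gg (iter k (glue J (g, h)) x).
      rewrite inE (negbTE nJ) /=.
      have nX : iter k (glue J (g, h)) x \notin X.
        apply/negP => kX; move: (disj_notin XR kX); by rewrite IH.
      by rewrite (negbTE nX) => ->.
  rewrite inE; apply/andP; split; last first.
    apply/eqP/setP => x; rewrite inE ffunE /=.
    case: (boolP (x \in J)) => xJ; first by rewrite (JXx _ xJ) hR.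
    case: (boolP (x \in X)) => //= xX.
    by apply/negP => gR; move: (disj_notin XR (gX _ xX xJ)); rewrite gR.
  apply/FsetP => x; rewrite ffunE /=.
  case: (boolP (x \in X)) => xX; last first.
    have xJ : x \notin J by apply/negP => /JXx; rewrite (negbTE xX).
    rewrite (negbTE xJ); have := Gg x; rewrite inE (negbTE xX) andbF.
    done.
  case: (boolP (x \in J)) => xJ.
    split; first by rewrite inE hR ?orbT.
    exists (h x); first exact: hR.
    by have := fconnect1 (glue J (g, h)) x; rewrite ffunE /= xJ.
  split; first by rewrite inE gX.
  have := Gg x; rewrite inE xJ xX /=; case=> _ [y yJ gy].
  have [k gk] := fconnect_iterP gy.
  case: (claim x k) => [e|e]; last first.
    by exists (iter k (glue J (g, h)) x) => //; apply: fconnect_iter.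
  exists (iter k.+1 (glue J (g, h)) x); last by apply: fconnect_iter.
  by rewrite /= e gk ffunE /= yJ hR.
Qed.

Lemma glue_inj X R J : {in setX (Fset (X :\: J) J) (Hset J R) &, injective (glue J)}.
Proof.
move=> [g h] [g' h'] /setXP [/= /FsetP G]; rewrite inE => /forallP H.
move=> /setXP [/= /FsetP G']; rewrite inE => /forallP H' e.
have e' x : glue J (g, h) x = glue J (g', h') x by rewrite e.
have gJ (k : {ffun T -> T}) : (forall x, if x \in X :\: J then
  (k x \in X :\: J :|: J) /\ (exists2 y : T, y \in J & fconnect k x y) else k x = x) ->
  forall x, x \in J -> k x = x.
  by move=> Gk x xJ; have := Gk x; rewrite !inE xJ.
congr pair; apply/ffunP => x; move: (e' x); rewrite !ffunE /=; case: (boolP (x \in J)) => xJ //.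
- by rewrite (gJ _ G) // (gJ _ G').
- by have := H x; have := H' x; rewrite (negbTE xJ) => /eqP -> /eqP ->.
Qed.

Lemma fiber_card X R J : X :&: R = set0 -> J \subset X ->
  #|[set f in Fset X R | Jf X R f == J]| = #|R| ^ #|J| * #|Fset (X :\: J) J|.
Proof.
move=> XR JX; rewrite fiber // card_in_imset; last exact: glue_inj.
by rewrite cardsX Hset_card mulnC.
Qed.

Lemma F_empty R : Fset set0 R = [set [ffun x => x]].
Proof.
apply/setP => f; rewrite inE; apply/FsetP/eqP.
- by move=> H; apply/ffunP => x; have := H x; rewrite inE ffunE.
- by move=> -> x; rewrite inE ffunE.
Qed.

Lemma F_noR X : X != set0 -> Fset X set0 = set0.
Proof.
case/set0Pn => x xX; apply/setP => f; rewrite in_set0; apply/negP => /FsetP H.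
by have := H x; rewrite xX; case=> _ [y]; rewrite inE.
Qed.

Lemma sum_subsets X (G : nat -> nat) :
  \sum_(J : {set T} | J \subset X) G #|J| = \sum_(j < #|X|.+1) 'C(#|X|, j) * G j.
Proof.
rewrite (partition_big (fun J : {set T} => inord #|J| : 'I_#|X|.+1) xpredT) //=.
apply: eq_bigr => j _.
rewrite (eq_bigr (fun _ => G j)); last first.
  move=> J /andP [JX /eqP <-]; rewrite inordK // ltnS; exact: subset_leq_card.
rewrite sum_nat_const -cards_draws; congr (_ * _).
apply: eq_card => J; rewrite !inE unfold_in /=; case: (boolP (J \subset X)) => //= JX.
apply/eqP/eqP => [<- | ->]; last by apply/val_inj; rewrite /= inordK.
by rewrite inordK // ltnS; exact: subset_leq_card.
Qed.

End FunCount.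

Lemma abel_id x s :
  \sum_(j < x.+1) 'C(x, j) * (s ^ j * j * x ^ (x - j)) = s * x * (s + x) ^ x.-1.
Proof.
case: x => [|x]; first by rewrite big_ord_recl big_ord0 /= !muln0.
rewrite big_ord_recl /= !muln0 ?mul0n add0n.
rewrite (addnC s) expnDn /= big_distrr /=.
apply: eq_bigr => i _; rewrite /bump /= add1n subSS.
have e : 'C(x.+1, i.+1) * i.+1 = x.+1 * 'C(x, i).
  by rewrite mulnC -mul_bin_diag.
rewrite expnS.
transitivity (('C(x.+1, i.+1) * i.+1) * s * s ^ i * x.+1 ^ (x - i)); first ring.
rewrite e; ring.
Qed.

Section FunCount2.
Variable T : finType.
Implicit Types (X R J : {set T}).

Lemma card_fibers X R : #|Fset X R| =
  \sum_(J : {set T} | J \subset X) #|[set f in Fset X R | Jf X R f == J]|.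
Proof.
rewrite -sum1_card (partition_big (Jf X R) (fun J => J \subset X)) /=; last first.
  by move=> f _; apply/subsetP => x; rewrite inE => /andP [].
apply: eq_bigr => J _; rewrite -sum1_card; apply: eq_bigl => f; by rewrite !inE.
Qed.

Lemma Fcount X R : X :&: R = set0 ->
  #|Fset X R| * (#|X| + #|R|) = #|R| * (#|X| + #|R|) ^ #|X|.
Proof.
move=> XR; move Xx: #|X| => x.
elim/ltn_ind: x X Xx R XR => x IH X Xx R XR.
case: (eqVneq X set0) => [X0 | X0].
  by move: Xx; rewrite X0 F_empty cards1 cards0 => <- /=; rewrite mul1n expn0 muln1.
have xpos : 0 < x by rewrite -Xx card_gt0.
set s := #|R|.
have key : #|Fset X R| * x = s * x * (s + x) ^ x.-1.
  rewrite card_fibers big_distrl /=.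
  transitivity (\sum_(J : {set T} | J \subset X) (s ^ #|J| * #|J| * x ^ (x - #|J|))).
    apply: eq_bigr => J JX; rewrite fiber_card //.
    case: (eqVneq J set0) => [-> | J0].
      by rewrite setD0 F_noR // cards0 cards0 /= !muln0 mul0n.
    have JXc : #|J| <= x by rewrite -Xx subset_leq_card.
    have Jpos : 0 < #|J| by rewrite card_gt0.
    have lt : #|X :\: J| < x by rewrite cardsDS // Xx; lia.
    have XJ : (X :\: J) :&: J = set0.
      by apply/setP => y; rewrite !inE; case: (y \in J); rewrite ?andbF.
    have := IH _ lt (X :\: J) erefl J XJ.
    rewrite cardsDS // Xx subnK // => H.
    by rewrite -mulnA H mulnA.
  by rewrite (sum_subsets X (fun j => s ^ j * j * x ^ (x - j))) Xx abel_id.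
apply/eqP; rewrite -(eqn_pmul2l xpos) mulnA (mulnC x) key.
case: x xpos {IH Xx key} => // x _ /=.
by rewrite expnS (addnC s); apply/eqP; ring.
Qed.

End FunCount2.


Lemma pair_eq (T : finType) (a b c d : T) : [set a; b] = [set c; d] ->
  (a = c /\ b = d) \/ (a = d /\ b = c).
Proof.
move=> e.
have ha : a \in [set c; d] by rewrite -e set21.
have hb : b \in [set c; d] by rewrite -e set22.
have hc : c \in [set a; b] by rewrite e set21.
have hd : d \in [set a; b] by rewrite e set22.
case/set2P: ha => ?; case/set2P: hb => ?; subst; auto.
- by case/set2P: hd => ?; subst; auto.
- by case/set2P: hc => ?; subst; auto.
Qed.

Lemma adj_sym (T : finType) (E : {set {set T}}) : symmetric (adj E).
Proof. by move=> x y; rewrite /adj setUC. Qed.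

Section FunTree.
Variable V : finType.
Variable r : V.
Implicit Types (f g : {ffun V -> V}).

Definition F0 := Fset [set~ r] [set r].
Definition Ef f : {set {set V}} := [set [set x; f x] | x in [set~ r]].

Section OneF.
Variable f : {ffun V -> V}.
Hypothesis Ff : f \in F0.

Lemma F0_r : f r = r.
Proof. by move/FsetP: Ff => /(_ r); rewrite !inE eqxx. Qed.

Lemma F0_reach x : fconnect f x r.
Proof.
case: (eqVneq x r) => [-> | xr]; first exact: connect0.
move/FsetP: Ff => /(_ x); rewrite !inE xr /=; case=> _ [y].
by rewrite inE => /eqP ->.
Qed.

Lemma F0_iter_r k : iter k f r = r.
Proof. by apply: iter_fix; apply: F0_r. Qed.

Lemma F0_noloop x : x != r -> f x != x.
Proof.
move=> xr; apply/eqP => fx.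
have [k] := fconnect_iterP (F0_reach x).
by rewrite iter_fix // => e; rewrite e eqxx in xr.
Qed.

Lemma F0_no2 x : x != r -> f (f x) != x.
Proof.
move=> xr; apply/eqP => ffx.
have cl k : iter k f x = x \/ iter k f x = f x.
  elim: k => [|k [IH|IH]] /=; [by left | by rewrite IH; right | by rewrite IH ffx; left].
have [k] := fconnect_iterP (F0_reach x).
case: (cl k) => -> e; first by rewrite e eqxx in xr.
by move: ffx; rewrite e F0_r => e'; rewrite e' eqxx in xr.
Qed.

Lemma Ef_inj : {in [set~ r] &, injective (fun x => [set x; f x])}.
Proof.
move=> x y; rewrite !inE => xr yr /pair_eq [[]//|[e1 e2]].
by move: (F0_no2 xr); rewrite e2 -e1 eqxx.
Qed.

Lemma card_Ef : #|Ef f| = #|V|.-1.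
Proof. by rewrite card_in_imset ?cardsC1 //; apply: Ef_inj. Qed.

Lemma adj_Ef x y : adj (Ef f) x y ->
  (x != r /\ y = f x) \/ (y != r /\ x = f y).
Proof.
by rewrite /adj => /imsetP [z]; rewrite !inE => zr /pair_eq [[-> ->]|[-> ->]]; [left|right].
Qed.

Lemma adj_Ef1 x : x != r -> adj (Ef f) x (f x).
Proof. by move=> xr; rewrite /adj; apply/imsetP; exists x; rewrite // !inE. Qed.

Lemma Ef_tree : is_tree (Ef f).
Proof.
rewrite /is_tree; apply/andP; split; first (apply/andP; split).
- apply/forall_inP => e /imsetP [z]; rewrite !inE => zr ->.
  by rewrite cards2 (eq_sym z) F0_noloop.
- have toR x : connect (adj (Ef f)) x r.
    have [k] := fconnect_iterP (F0_reach x).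
    elim: k x => [|k IH] x; first by move=> /= ->; apply: connect0.
    rewrite iterSr => e.
    case: (eqVneq x r) => [-> | xr]; first exact: connect0.
    apply: connect_trans (IH (f x) e).
    by apply: connect1; apply: adj_Ef1.
  apply/forallP => x; apply/forallP => y.
  apply: connect_trans (toR x) _.
  by rewrite (sym_connect_sym (@adj_sym _ _)) toR.
- by rewrite card_Ef.
Qed.

Lemma children_Ef : children (Ef f) r = Jf [set~ r] [set r] f.
Proof.
apply/setP => c; rewrite !inE; apply/idP/idP.
- case/adj_Ef => [[]|[cr ->]]; first by rewrite eqxx.
  by rewrite eqxx andbT eq_sym F0_noloop.
- case/andP => cr /eqP fc.
  by rewrite adj_sym; have := adj_Ef1 cr; rewrite fc.
Qed.

End OneF.

Lemma Ef_injF : {in F0 &, injective Ef}.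
Proof.
move=> f g Ff Fg e; apply/ffunP => x.
case: (eqVneq x r) => [-> | xr]; first by rewrite !F0_r.
have [k] := fconnect_iterP (F0_reach Fg x).
elim: k x xr => [|k IH] x xr; first by move=> /= e'; rewrite e' eqxx in xr.
rewrite iterSr => ek.
have : [set x; g x] \in Ef f by rewrite e; apply/imsetP; exists x; rewrite // !inE.
case/imsetP => z; rewrite !inE => zr /pair_eq [[<- ->]|[e1 e2]] //.
subst z.
have := IH (g x) zr ek; rewrite -e1 => e3.
by move: (F0_no2 Fg xr); rewrite -e3 eqxx.
Qed.

End FunTree.

Section TreeFun.
Variable V : finType.
Variable r : V.
Variable E : {set {set V}}.
Hypothesis tE : is_tree E.

Definition Bk k := iter k (fun B : {set V} =>
  B :|: [set y | [exists x in B, adj E x y]]) [set r].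

Lemma BS k : Bk k.+1 = Bk k :|: [set y | [exists x in Bk k, adj E x y]].
Proof. by []. Qed.

Lemma B_path p x j : x \in Bk j -> path (adj E) x p ->
  last x p \in Bk (j + size p).
Proof.
elim: p x j => [|y p IH] x j /=; first by rewrite addn0.
move=> xB /andP [axy pp]; rewrite addnS -addSn; apply: IH => //.
rewrite BS inE; apply/orP; right; rewrite inE; apply/exists_inP; exists x => //.
Qed.

Lemma tE_conn x y : connect (adj E) x y.
Proof.
move: tE; rewrite /is_tree => /andP [/andP [_ H] _].
by move/forallP: H => /(_ x) /forallP /(_ y).
Qed.

Lemma tE_card : #|E| = #|V|.-1.
Proof. by move: tE; rewrite /is_tree => /andP [_ /eqP]. Qed.

Lemma B_ex x : exists2 k, k < #|V| & x \in Bk k.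
Proof.
case/connectP: (tE_conn r x) => p pp ->.
case: (shortenP pp) => p' pp' up _.
exists (size p'); last first.
  by have := B_path (j := 0) _ pp'; rewrite add0n; apply; rewrite /Bk /= set11.
have := max_card (mem (r :: p')).
by rewrite (card_uniqP up) /=.
Qed.

Definition dist x := find (fun k => x \in Bk k) (iota 0 #|V|).

Lemma D1 x : x \in Bk (dist x) /\ dist x < #|V|.
Proof.
have hh : has (fun k => x \in Bk k) (iota 0 #|V|).
  by case: (B_ex x) => k kV xk; apply/hasP; exists k; rewrite // mem_iota.
have lt : dist x < #|V| by move: hh; rewrite has_find size_iota.
split => //.
by have := nth_find 0 hh; rewrite -/(dist x) nth_iota.
Qed.

Lemma D2 x k : k < dist x -> x \notin Bk k.
Proof.
move=> lt; have := before_find 0 lt.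
have lt' : k < #|V| by apply: leq_trans lt (leq_trans (find_size _ _) _); rewrite size_iota.
by rewrite nth_iota // add0n => ->.
Qed.

Lemma D3 x : x != r -> exists y, adj E y x && (dist y < dist x).
Proof.
move=> xr; have [xB _] := D1 x.
move: xB (@D2 x); case: (dist x) => [|d].
  by rewrite /Bk /= inE (negbTE xr).
rewrite BS inE => /orP [xB | H] D.
  by move: (D d (ltnSn d)); rewrite xB.
rewrite inE in H; case/exists_inP: H => y yB ayx; exists y; rewrite ayx /= ltnS.
rewrite leqNgt; apply/negP => lt; move: (D2 lt); by rewrite yB.
Qed.

Definition fE : {ffun V -> V} := [ffun x => if x == r then r
  else odflt r [pick y | adj E y x && (dist y < dist x)]].

Lemma fE_spec x : x != r -> adj E (fE x) x && (dist (fE x) < dist x).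
Proof.
move=> xr; rewrite ffunE (negbTE xr); case: pickP => [y //|none].
by case: (D3 xr) => y; rewrite none.
Qed.

Lemma fE_r : fE r = r.
Proof. by rewrite ffunE eqxx. Qed.

Lemma fE_reach x : fconnect fE x r.
Proof.
have [n] := ubnP (dist x); elim: n x => // n IH x lt.
case: (eqVneq x r) => [-> | xr]; first exact: connect0.
apply: connect_trans (fconnect1 fE x) (IH _ _).
by case/andP: (fE_spec xr) => _ h; apply: leq_trans h _.
Qed.

Lemma fE_F0 : fE \in F0 r.
Proof.
apply/FsetP => x; rewrite !inE; case: (eqVneq x r) => [-> | xr] /=.
  exact: fE_r.
split; first by case: (fE x == r); rewrite ?orbT.
by exists r; rewrite ?inE ?fE_reach.
Qed.

Lemma Ef_fE : Ef r fE = E.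
Proof.
apply/eqP; rewrite eqEcard (card_Ef fE_F0) tE_card leqnn andbT.
apply/subsetP => e /imsetP [x]; rewrite !inE => xr ->.
by case/andP: (fE_spec xr); rewrite /adj setUC.
Qed.

End TreeFun.

Section Subtrees.
Variable V : finType.
Variable r : V.
Variable f : {ffun V -> V}.
Hypothesis Ff : f \in F0 r.

Lemma fconn_step x c : fconnect f x c -> x != c -> fconnect f (f x) c.
Proof.
move=> /fconnect_iterP [[|k] e] xc; first by rewrite -e eqxx in xc.
by rewrite -e iterSr; apply: fconnect_iter.
Qed.

Lemma sub_anc c y : f c = r -> c != r -> y \in subtree (Ef r f) r c ->
  fconnect f y c.
Proof.
move=> fc cr; rewrite inE => /connectP [p pp ->] {y}.
have aux : forall p x, fconnect f x c -> path (adj_del (Ef r f) r) x p ->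
    fconnect f (last x p) c.
  elim=> [|z q IH] x //= fx /andP [/and3P [xr zr axz] qq].
  apply: IH qq.
  case/adj_Ef: axz => [[_ ez]|[_ ex]].
  - rewrite ez; apply: fconn_step => //.
    by apply/eqP => exc; move: zr; rewrite ez exc fc eqxx.
  - by apply: connect_trans (fconnect1 f z) _; rewrite -ex.
by apply: aux pp; apply: connect0.
Qed.

Lemma anc_unique y c c' : f c = r -> f c' = r -> c != r -> c' != r ->
  fconnect f y c -> fconnect f y c' -> c = c'.
Proof.
move=> fc fc' cr cr' /fconnect_iterP [a ea] /fconnect_iterP [b eb].
have gen a' b' d d' : f d = r -> d' != r -> a' < b' -> iter a' f y = d ->
    iter b' f y = d' -> False.
  move=> fd dr lt ed ed'.
  move: ed'; rewrite -(subnK (ltnW lt)).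
  case e: (b' - a') => [|t]; first by move: lt; rewrite -subn_gt0 e.
  rewrite iterD ed iterSr fd F0_iter_r // => er.
  by rewrite -er eqxx in dr.
case: (ltngtP a b) => [lt|lt|e].
- by case: (gen _ _ _ _ fc cr' lt ea eb).
- by case: (gen _ _ _ _ fc' cr lt eb ea).
- by rewrite -ea -eb e.
Qed.

Lemma card_sum (T : finType) (P : pred T) : #|[set y | P y]| = \sum_y (P y : nat).
Proof.
rewrite -sum1_card big_mkcond; apply: eq_bigr => y _; rewrite inE; by case: (P y).
Qed.

Lemma sub_bound (Cs Cl : {set V}) :
  Cs \subset Jf [set~ r] [set r] f -> Cl \subset Jf [set~ r] [set r] f ->
  Cs :&: Cl = set0 ->
  \sum_(c in Cs) #|subtree (Ef r f) r c| + #|Cl| <= #|V|.-1.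
Proof.
move=> sCs sCl dis.
have inJ c : c \in Jf [set~ r] [set r] f -> (c != r) /\ (f c = r).
  by rewrite !inE => /andP [-> /eqP].
have step1 : \sum_(c in Cs) #|subtree (Ef r f) r c| <=
             \sum_(c in Cs) \sum_y (fconnect f y c : nat).
  apply: leq_sum => c cCs; rewrite -card_sum; apply: subset_leq_card.
  have [cr fc] := inJ c (subsetP sCs c cCs).
  by apply/subsetP => y yc; rewrite inE; apply: sub_anc.
have step2 : \sum_(c in Cs) \sum_y (fconnect f y c : nat) <=
             \sum_y ((y != r) && (y \notin Cl) : nat).
  rewrite exchange_big; apply: leq_sum => y _.
  case: (pickP (fun c => (c \in Cs) && fconnect f y c)) => [c0 /andP [c0s yc0] | none].
  - have [c0r fc0] := inJ c0 (subsetP sCs c0 c0s).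
    rewrite (bigD1 c0) //= big1 ?addn0; last first.
      move=> c /andP [cCs cc0]; have [cr fc] := inJ c (subsetP sCs c cCs).
      case: (boolP (fconnect f y c)) => // yc.
      by rewrite (anc_unique fc0 fc c0r cr yc0 yc) eqxx in cc0.
    rewrite yc0.
    have yr : y != r.
      apply/eqP => e; move: yc0; rewrite e => /fconnect_iterP [k].
      by rewrite F0_iter_r // => e'; rewrite e' eqxx in c0r.
    rewrite yr /=; case: (boolP (y \in Cl)) => // yCl; exfalso.
    have [_ fy] := inJ y (subsetP sCl y yCl).
    have e := anc_unique fc0 fy c0r yr yc0 (connect0 _ y).
    have : y \in Cs :&: Cl by rewrite inE yCl -e c0s.
    by rewrite dis inE.
  - rewrite big1 // => c cCs; by move: (none c); rewrite cCs /= => ->.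
have step3 : \sum_y ((y != r) && (y \notin Cl) : nat) = #|V|.-1 - #|Cl|.
  rewrite -card_sum -(cardsC1 r) -cardsDS; last first.
    apply/subsetP => c cCl; have [cr _] := inJ c (subsetP sCl c cCl).
    by rewrite !inE.
  by apply: eq_card => y; rewrite !inE andbC.
have clb : #|Cl| <= #|V|.-1.
  rewrite -(cardsC1 r); apply: subset_leq_card; apply/subsetP => c cCl.
  have [cr _] := inJ c (subsetP sCl c cCl); by rewrite !inE.
have := leq_trans step1 step2; rewrite step3 => h.
by rewrite -(subnK clb) leq_add2r.
Qed.

End Subtrees.


Lemma card_fibersP (T : finType) (X R : {set T}) (P : pred {set T}) :
  #|[set f in Fset X R | P (Jf X R f)]| =
  \sum_(J : {set T} | (J \subset X) && P J) #|[set f in Fset X R | Jf X R f == J]|.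
Proof.
rewrite -sum1_card (partition_big (Jf X R) (fun J => (J \subset X) && P J)) /=; last first.
  move=> f; rewrite inE => /andP [_ ->]; rewrite andbT.
  by apply/subsetP => x; rewrite inE => /andP [].
apply: eq_bigr => J /andP [_ PJ]; rewrite -sum1_card; apply: eq_bigl => f.
rewrite !inE; case: eqP => [-> | _]; by rewrite ?PJ ?andbT ?andbF.
Qed.

Lemma sum_eq0 a b v : (forall m, a <= m < b -> v != m) ->
  \sum_(a <= m < b) ((v == m) : nat) = 0.
Proof.
by move=> H; rewrite big_nat big1 // => m /H /negbTE ->.
Qed.

Lemma sum_eq1 a b v : a <= v <= b ->
  \sum_(a <= m < b.+1) ((v == m) : nat) = 1.
Proof.
case/andP => av vb.
rewrite (big_cat_nat av) /=; last by apply: leq_trans vb _.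
rewrite sum_eq0; last by move=> m /andP [_ mv]; rewrite neq_ltn mv orbT.
rewrite add0n big_ltn // eqxx sum_eq0 //.
by move=> m /andP [vm _]; rewrite neq_ltn vm.
Qed.

Lemma sum_card_fiber (T : finType) (Q : pred T) (g : T -> nat) a b :
  (forall x, Q x -> a <= g x <= b) ->
  \sum_(a <= m < b.+1) #|[set x | Q x && (g x == m)]| = #|[set x | Q x]|.
Proof.
move=> H.
rewrite (eq_bigr (fun m => \sum_x ((Q x && (g x == m)) : nat))); last first.
  by move=> m _; rewrite card_sum.
rewrite exchange_big card_sum; apply: eq_bigr => x _.
case: (boolP (Q x)) => Qx /=; last by rewrite big1.
by apply: sum_eq1; apply: H.
Qed.

Lemma trees_count (V : finType) (r : V) (P : pred {set V}) (s : nat) :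
  (forall S : {set V}, S \subset [set~ r] -> P S -> #|S| = s) ->
  #|[set E | is_tree E && P (children E r)]| * #|V|.-1 =
  #|[set S : {set V} | (S \subset [set~ r]) && P S]| * (s * #|V|.-1 ^ (#|V|.-1 - s)).
Proof.
move=> Ps.
have -> : [set E | is_tree E && P (children E r)] =
          Ef r @: [set f in F0 r | P (Jf [set~ r] [set r] f)].
  apply/setP => E; rewrite inE; apply/andP/imsetP.
  - case=> tE PE; exists (fE r E); last by rewrite Ef_fE.
    by rewrite inE fE_F0 //= -children_Ef ?fE_F0 // Ef_fE.
  - case=> f /setIdP [Ff Pf] ->; split; first exact: Ef_tree.
    by rewrite children_Ef.
rewrite card_in_imset; last first.
  by move=> f g /setIdP [Ff _] /setIdP [Fg _]; apply: Ef_injF.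
have XR : [set~ r] :&: [set r] = set0.
  by apply/setP => x; rewrite !inE; case: (x == r).
rewrite /F0 card_fibersP big_distrl /=.
rewrite (eq_bigr (fun _ => s * #|V|.-1 ^ (#|V|.-1 - s))); last first.
  move=> J /andP [JX PJ]; rewrite fiber_card // cards1 exp1n mul1n.
  have XJ : ([set~ r] :\: J) :&: J = set0.
    by apply/setP => y; rewrite !inE; case: (y \in J); rewrite ?andbF.
  have := Fcount XJ; rewrite cardsDS // cardsC1 (Ps _ JX PJ) subnK //.
  by rewrite -(Ps _ JX PJ) -(cardsC1 r); apply: subset_leq_card.
rewrite sum_nat_const; congr (_ * _); apply: eq_card => S; by rewrite !inE.
Qed.

Lemma card_ord_pred n (p : pred nat) :
  #|[set c : 'I_n | p c]| = \sum_(0 <= c < n) (p c : nat).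
Proof. by rewrite card_sum big_mkord. Qed.

Lemma card_lt n (r : 'I_n.+1) : #|[set c : 'I_n.+1 | c < r]| = r.
Proof.
rewrite (card_ord_pred n.+1 (fun c => c < r)).
rewrite (big_cat_nat (n := r)) //=; last exact: ltnW.
rewrite (eq_big_nat _ _ (F2 := fun _ => 1)); last by move=> c /andP [_ ->].
rewrite [X in _ + X](eq_big_nat _ _ (F2 := fun _ => 0)); last first.
  by move=> c /andP [rc _]; rewrite ltnNge rc.
by rewrite !sum_nat_const_nat muln1 muln0 addn0 subn0.
Qed.

Lemma card_gt n (r : 'I_n.+1) : #|[set c : 'I_n.+1 | r < c]| = n - r.
Proof.
rewrite (card_ord_pred n.+1 (fun c => r < c)).
rewrite (big_cat_nat (n := r.+1)) //=.
rewrite (eq_big_nat _ _ (F2 := fun _ => 0)); last first.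
  by move=> c /andP [_ rc]; rewrite ltnNge -ltnS rc.
rewrite [X in _ + X](eq_big_nat _ _ (F2 := fun _ => 1)); last first.
  by move=> c /andP [rc _]; rewrite rc.
by rewrite !sum_nat_const_nat muln1 muln0 add0n subSS.
Qed.

Lemma count_S n (r : 'I_n.+1) k l :
  #|[set S : {set 'I_n.+1} | (S \subset [set~ r]) &&
     ((#|[set c in S | c < r]| == k) && (#|[set c in S | r < c]| == l))]| =
  'C(r, k) * 'C(n - r, l).
Proof.
set L := [set c : 'I_n.+1 | c < r].
set U := [set c : 'I_n.+1 | r < c].
have LE (S : {set 'I_n.+1}) : [set c in S | c < r] = S :&: L.
  by apply/setP => c; rewrite !inE.
have UE (S : {set 'I_n.+1}) : [set c in S | r < c] = S :&: U.
  by apply/setP => c; rewrite !inE.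
have key (A1 B1 : {set 'I_n.+1}) : A1 \subset L -> B1 \subset U ->
    (A1 :|: B1) :&: L = A1 /\ (A1 :|: B1) :&: U = B1.
  move=> h1 h2; split; apply/setP => c; rewrite !inE.
  - case cA: (c \in A1) => /=; first by move: (subsetP h1 c cA); rewrite inE.
    case cB: (c \in B1) => //=; move: (subsetP h2 c cB); rewrite inE.
    by move=> h; rewrite ltnNge (ltnW h).
  - case cB: (c \in B1) => /=; first by rewrite orbT; move: (subsetP h2 c cB); rewrite inE.
    rewrite orbF; case cA: (c \in A1) => //=; move: (subsetP h1 c cA); rewrite inE.
    by move=> h; rewrite ltnNge (ltnW h).
have -> : [set S : {set 'I_n.+1} | (S \subset [set~ r]) &&
     ((#|[set c in S | c < r]| == k) && (#|[set c in S | r < c]| == l))] =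
   (fun p => p.1 :|: p.2) @: setX [set A : {set 'I_n.+1} | A \subset L & #|A| == k]
                                  [set B : {set 'I_n.+1} | B \subset U & #|B| == l].
  apply/setP => S; rewrite inE LE UE; apply/idP/imsetP.
  - case/andP => SX /andP [Sk Sl]; exists (S :&: L, S :&: U).
      by rewrite inE /= !inE !subsetIr Sk Sl.
    apply/setP => c; rewrite /= !inE.
    case cS: (c \in S) => //=.
    have : c != r by move: (subsetP SX c cS); rewrite !inE.
    by rewrite neq_ltn.
  - case=> [[A B]] /setXP [/=]; rewrite !inE => /andP [AL Ak] /andP [BU Bl] ->.
    have [e1 e2] := key _ _ AL BU.
    rewrite e1 e2 Ak Bl !andbT; apply/subsetP => c; rewrite !inE.
    case/orP => [cA | cB].
      by move: (subsetP AL c cA); rewrite inE neq_ltn => ->.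
    by move: (subsetP BU c cB); rewrite inE neq_ltn orbC => ->.
rewrite card_in_imset.
  by rewrite cardsX !cards_draws card_lt card_gt.
move=> [A B] [A' B']; rewrite !inE /=.
move=> /andP [/andP [AL _] /andP [BU _]] /andP [/andP [AL' _] /andP [BU' _]] e.
have [k1 k2] := key _ _ AL BU; have [k3 k4] := key _ _ AL' BU'.
move: e => /= e.
by congr pair; [rewrite -k1 -k3 e | rewrite -k2 -k4 e].
Qed.


Lemma main_nat (n i k l : nat) :
  (1 <= n)%N -> (1 <= i <= n.+1)%N -> (k <= n)%N -> (l <= n - k)%N ->
  ((\sum_(k <= m < (n - l).+1) Tcount n i k l m) * n =
   'C(i.-1, k) * 'C(n.+1 - i, l) * ((k + l) * n ^ (n - (k + l))))%N.
Proof.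
move=> n1 /andP [i1 iN] kn lnk.
set r : 'I_n.+1 := inord i.-1.
have rv : (r : nat) = i.-1 by rewrite inordK //; lia.
pose P := fun S : {set 'I_n.+1} =>
  (#|[set c in S | c < r]| == k) && (#|[set c in S | r < c]| == l).
pose g := fun E : {set {set 'I_n.+1}} =>
  \sum_(c in children E r | c < r) #|subtree E r c|.
have T1 m : Tcount n i k l m =
    #|[set E | (is_tree E && P (children E r)) && (g E == m)]|.
  by rewrite /Tcount /=; apply: eq_card => E; rewrite !inE /P !andbA.
have bounds E : is_tree E && P (children E r) -> k <= g E <= n - l.
  case/andP => tE /andP [/eqP Pk /eqP Pl].
  have Ff := fE_F0 r tE; have eE := Ef_fE r tE.
  set f := fE r E in Ff eE.
  have ch : children E r = Jf [set~ r] [set r] f by rewrite -{1}eE children_Ef.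
  apply/andP; split.
  - rewrite -Pk -sum1dep_card; apply: leq_sum => c _.
    by rewrite card_gt0; apply/set0Pn; exists c; rewrite inE connect0.
  - have := sub_bound Ff (Cs := [set c in children E r | c < r])
                         (Cl := [set c in children E r | r < c]).
    rewrite -ch eE card_ord Pl /=.
    have -> : \sum_(c in [set c in children E r | c < r]) #|subtree E r c| = g E.
      by apply: eq_bigl => c; rewrite inE.
    move=> H; have : g E + l <= n.
      apply: H.
      + by apply/subsetP => c; rewrite inE => /andP [].
      + by apply/subsetP => c; rewrite inE => /andP [].
      + apply/setP => c; rewrite !inE; apply/negP => /andP [/andP [_ h1] /andP [_ h2]].
        by move: (ltn_trans h1 h2); rewrite ltnn.
    lia.
rewrite (eq_bigr _ (fun m _ => T1 m)) (sum_card_fiber bounds).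
have Hs (S : {set 'I_n.+1}) : S \subset [set~ r] -> P S -> #|S| = k + l.
  move=> SX /andP [/eqP Pk /eqP Pl].
  rewrite -(cardsID [set c : 'I_n.+1 | c < r] S); congr (_ + _).
    by rewrite -Pk; apply: eq_card => c; rewrite !inE andbC.
  rewrite -Pl; apply: eq_card => c; rewrite !inE.
  case cS: (c \in S) => /=; last by rewrite andbF.
  have : c != r by move: (subsetP SX c cS); rewrite !inE.
  rewrite neq_ltn; case: ltngtP => //.
have := trees_count Hs; rewrite card_ord /= => ->.
rewrite /P count_S rv.
have -> : n - i.-1 = n.+1 - i by lia.
by rewrite mulnA.
Qed.

Unset Implicit Arguments.
Import GRing.Theory Num.Theory.
Local Open Scope ring_scope.

Theorem mainTheorem2 (n i k l : nat) :
  (1 <= n)%N -> (1 <= i <= n.+1)%N -> (k <= n)%N -> (l <= n - k)%N ->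
  ((\sum_(k <= m < (n - l).+1) Tcount n i k l m)%N%:R : rat) =
  ('C(i.-1, k))%:R * ('C(n.+1 - i, l))%:R * (k + l)%:R
    * (n%:R : rat) ^ (n%:Z - (k + l)%:Z - 1).
Proof.
move=> n1 iH kn lnk.
have H := main_nat n1 iH kn lnk.
set N := (\sum_(k <= m < (n - l).+1) Tcount n i k l m)%N in H *.
have nz : (n%:R : rat) != 0 by rewrite pnatr_eq0 -lt0n.
have ez : (n%:Z - (k + l)%:Z - 1 = (n - (k + l))%N%:Z + (-1))%R.
  rewrite -subzn; last by lia.
  done.
rewrite ez expfzDr // exprN1.
have : (N%:R * n%:R : rat) = ('C(i.-1, k) * 'C(n.+1 - i, l) * ((k + l) * n ^ (n - (k + l))))%N%:R.
  by rewrite -natrM H.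
rewrite !natrM natrX => e.
apply: (mulIf nz); rewrite e.
have -> : (n%:R : rat) ^ ((n - (k + l))%N%:Z) = (n%:R : rat) ^+ (n - (k + l)) by [].
by field.
Qed.
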